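(* For every positive integer $n$, $$\sum_{T\in\mathsf{T}_n} t^{\operatorname{leg}(T)}=\sum_{\mathbf a\in\mathsf{PF}_n} t^{z(\mathbf a)}$$ as polynomials in $t$.
   Context: Let $[n]=\{1,\dots,n\}$. $\mathsf{T}_n$ is the set of labeled trees on the vertex set $\{0,1,\dots,n\}$, rooted at $0$. For $T\in\mathsf{T}_n$, run the depth-first search algorithm on $T$ starting at the root $0$, where at each vertex the algorithm moves to the unvisited neighbor of highest label. Let $\mathbf v(T)=(v_1,\dots,v_k)$ be the ordered list of vertices other than the root that are visited before the algorithm backtracks for the first time (if $T$ is a path with endpoint $0$, this is all non-root vertices), and let $\operatorname{leg}(T)=k$. $\mathsf{PF}_n$ is the set of parking functions of length $n$: tuples $\mathbf a=(a_1,\dots,a_n)$ of positive integers such that, for every $i\in[n]$, the $i$th smallest entry is at most $i$ (equivalently $|\{j: a_j\le i\}|\ge i$ for all $i\in[n]$). For $\mathbf a\in[n]^n$, the center $Z(\mathbf a)$ is the largest subset $X=\{x_1<\dots<x_\ell\}\subseteq[n]$ such that $a_{x_i}\le i$ for every $i\in[\ell]$, and $z(\mathbf a)=|Z(\mathbf a)|$. *)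

(* Defs.v *)
From mathcomp Require Import all_boot all_order all_algebra.
Set Implicit Arguments. Unset Strict Implicit. Unset Printing Implicit Defensive.

(* Simple graphs on the vertex set {0,...,n} = 'I_n.+1, given by their edge
   set: a set of 2-element subsets of vertices. *)
Definition graph (n : nat) := {set {set 'I_n.+1}}.

Definition adj (n : nat) (E : graph n) : rel 'I_n.+1 :=
  fun x y => [set x; y] \in E.

Definition is_tree (n : nat) (E : graph n) : bool :=
  [forall e in E, #|e| == 2]
  && [forall v : 'I_n.+1, connect (adj E) ord0 v]
  && (#|E| == n).

Definition trees (n : nat) : {set graph n} := [set E | is_tree E].

(* Depth-first search from the current vertex [cur], with [visited] the list
   of already visited vertices: move to the unvisited neighbour of highest
   label; stop (count nothing more) at the first vertex with no unvisited
   neighbour, i.e. at the first backtrack.  Since [enum 'I_n.+1] lists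
   vertices in increasing order, the [last] element of the filtered list is the
   unvisited neighbour of highest label. *)
Fixpoint dfs_first_branch (n : nat) (E : graph n) (fuel : nat)
    (cur : 'I_n.+1) (visited : seq 'I_n.+1) : nat :=
  match fuel with
  | 0 => 0
  | fuel'.+1 =>
      let cands := [seq y <- enum 'I_n.+1 | adj E cur y && (y \notin visited)] in
      if cands is c :: cs then
        let m := last c cs in
        (dfs_first_branch E fuel' m (m :: visited)).+1
      else 0
  end.

(* leg(T) = number of non-root vertices visited before the first backtrack
   (n+1 steps of fuel are more than enough: at most n non-root vertices). *)
Definition leg (n : nat) (E : graph n) : nat :=
  dfs_first_branch E n.+1 ord0 [:: ord0].

(* Tuples a = (a_1,...,a_n) with positions 1..n encoded as 'I_n (position
   j+1 <-> j) and values in {0,...,n} ('I_n.+1). *)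
Definition parking_functions (n : nat) : {set {ffun 'I_n -> 'I_n.+1}} :=
  [set a : {ffun 'I_n -> 'I_n.+1} | [forall j, 0 < (a j : nat)]
           && [forall i : 'I_n.+1, (0 < (i : nat)) ==>
                 ((i : nat) <= #|[set j | (a j : nat) <= i]|)]].

(* X = {x_1 < ... < x_l} satisfies a_{x_i} <= i for all i; the (1-based)
   rank i of x in X is #|{y in X | y <= x}|. *)
Definition center_ok (n : nat) (a : {ffun 'I_n -> 'I_n.+1}) (X : {set 'I_n}) : bool :=
  [forall x in X, (a x : nat) <= #|[set y in X | y <= x]|].

Definition zcenter (n : nat) (a : {ffun 'I_n -> 'I_n.+1}) : nat :=
  \max_(X : {set 'I_n} | center_ok a X) #|X|.

(* Main.v *)
Require Import Defs.
From mathcomp Require Import all_boot all_order all_algebra zify.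
Set Implicit Arguments. Unset Strict Implicit. Unset Printing Implicit Defensive.

Section Search.
Variable n : nat.
Local Notation V := 'I_n.+1.
Variable ch : seq V -> nat -> {set V}.

Definition nbX (X : seq V) (l : nat) : bool := [exists v, (v \in ch X l) && (v \notin X)].
Fixpoint srch (X : seq V) (l : nat) : option nat :=
  if l is l'.+1 then (if nbX X l' then Some l' else srch X l') else None.
Definition candl (X : seq V) (l : nat) := [seq y <- enum V | (y \in ch X l) && (y \notin X)].
Definition nextv (X : seq V) : option V :=
  if srch X (size X) is Some l then Some (last ord0 (candl X l)) else None.
Fixpoint ordr (k : nat) : seq V :=
  if k is k'.+1 then (let X := ordr k' in if nextv X is Some v then rcons X v else X)
  else [:: ord0].

Lemma srch_some X l m : srch X l = Some m -> m < l /\ nbX X m.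
Proof.
elim: l => [|l IH] //=; case: ifP => [h [<-]|_ /IH [h1 h2]]; split => //; lia.
Qed.

Lemma srch_none X l m : m < l -> nbX X m -> srch X l <> None.
Proof.
elim: l => [|l IH] //= hm hb; case: ifP => // hn.
move: hm; rewrite ltnS leq_eqVlt => /orP [/eqP E|hlt].
  by subst m; rewrite hb in hn.
exact: IH.
Qed.

Lemma candl_mem X l y : (y \in candl X l) = (y \in ch X l) && (y \notin X).
Proof. by rewrite mem_filter mem_enum andbT. Qed.

Lemma nextv_some X v : nextv X = Some v ->
  exists m, [/\ srch X (size X) = Some m, m < size X, v = last ord0 (candl X m),
     v \in ch X m & v \notin X].
Proof.
rewrite /nextv; case E: srch => [m|] // [<-].
have [h1 h2] := srch_some E.
have : last ord0 (candl X m) \in candl X m.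
  move: h2 => /existsP [w hw].
  have : w \in candl X m by rewrite candl_mem.
  case: (candl X m) => [|c cs] //= _; exact: mem_last.
rewrite candl_mem => /andP [h3 h4]; by exists m.
Qed.

Lemma ordr_prefix k k' : k <= k' -> exists t, ordr k' = ordr k ++ t.
Proof.
elim: k' => [|k' IH]; first by rewrite leqn0 => /eqP ->; exists [::]; rewrite cats0.
rewrite leq_eqVlt => /orP [/eqP ->|]; first by exists [::]; rewrite cats0.
rewrite ltnS => /IH [t ht] /=; case: nextv => [v|]; last by exists t.
by exists (rcons t v); rewrite ht rcons_cat.
Qed.

Lemma ordr_uniq k : uniq (ordr k).
Proof.
elim: k => [|k IH] //=; case E: nextv => [v|] //.
have [m [_ _ _ _ hv]] := nextv_some E.
by rewrite rcons_uniq hv IH.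
Qed.

Lemma ordr_size k : size (ordr k) <= k.+1.
Proof. elim: k => [|k IH] //=; case: nextv => [v|]; rewrite ?size_rcons; lia. Qed.

Lemma ordr_head k : nth ord0 (ordr k) 0 = ord0.
Proof.
have [t ->] := ordr_prefix (leq0n k); done.
Qed.

Lemma ordr_nth k k' i : k <= k' -> i < size (ordr k) -> nth ord0 (ordr k') i = nth ord0 (ordr k) i.
Proof. by move=> /ordr_prefix [t ->] hi; rewrite nth_cat hi. Qed.

Lemma ordr_full N :
  (forall k, k < N -> size (ordr k) = k.+1 -> exists2 m, m < k.+1 & nbX (ordr k) m) ->
  forall k, k <= N -> size (ordr k) = k.+1.
Proof.
move=> prog; elim => [|k IH] // hk.
have hs : size (ordr k) = k.+1 by apply: IH; lia.
have [m hm hb] := prog k hk hs.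
rewrite /= /nextv hs.
case E: srch => [l|]; first by rewrite size_rcons hs.
by exfalso; apply: (srch_none hm hb).
Qed.

Lemma ordr_step k : size (ordr k.+1) = k.+2 -> size (ordr k) = k.+1 ->
  exists m, [/\ srch (ordr k) k.+1 = Some m, m < k.+1,
    nth ord0 (ordr k.+1) k.+1 = last ord0 (candl (ordr k) m),
    nth ord0 (ordr k.+1) k.+1 \in ch (ordr k) m & nth ord0 (ordr k.+1) k.+1 \notin ordr k].
Proof.
move=> h1 h0; move: h1 => /=; case E: nextv => [v|]; last by rewrite h0; lia.
move=> _; have [m [s1 s2 s3 s4 s5]] := nextv_some E.
exists m; rewrite nth_rcons h0 ltnn eqxx; split.
- by move: s1; rewrite h0.
- by rewrite -h0.
- exact: s3.
- exact: s4.
- exact: s5.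
Qed.

End Search.

Lemma ordr_ext n (ch1 ch2 : seq 'I_n.+1 -> nat -> {set 'I_n.+1}) N :
  (forall k, k < N -> forall l, l < size (ordr ch1 k) -> forall y,
     (y \in ch1 (ordr ch1 k) l) && (y \notin ordr ch1 k) =
     (y \in ch2 (ordr ch1 k) l) && (y \notin ordr ch1 k)) ->
  forall k, k <= N -> ordr ch1 k = ordr ch2 k.
Proof.
move=> H; elim => [|k IH] // hk /=.
have e := IH (ltnW hk); rewrite -e.
have hs : forall l, l <= size (ordr ch1 k) -> srch ch1 (ordr ch1 k) l = srch ch2 (ordr ch1 k) l.
  elim => [|l IHl] //= hl.
  have -> : nbX ch1 (ordr ch1 k) l = nbX ch2 (ordr ch1 k) l.
    apply: eq_existsb => y; exact: H.
  by rewrite IHl ?(ltnW hl).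
have hc : forall l, l < size (ordr ch1 k) -> candl ch1 (ordr ch1 k) l = candl ch2 (ordr ch1 k) l.
  by move=> l hl; apply: eq_filter => y; exact: H.
rewrite /nextv hs //.
case E: srch => [m|] //.
have [hm _] := srch_some E.
by rewrite hc.
Qed.


Definition Eq n (X : seq 'I_n.+1) (q : 'I_n -> nat) : graph n :=
  [set [set lift ord0 j; nth ord0 X (q j)] | j : 'I_n].
Definition Bq n (q : 'I_n -> nat) (l : nat) : {set 'I_n.+1} :=
  [set v | if unlift ord0 v is Some j then q j == l else false].

Lemma pair_eq (T : finType) (x y u w : T) : [set x; y] = [set u; w] ->
  (x = u /\ y = w) \/ (x = w /\ y = u).
Proof.
move=> E.
have hx : x \in [set u; w] by rewrite -E set21.
have hy : y \in [set u; w] by rewrite -E set22.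
have hu : u \in [set x; y] by rewrite E set21.
have hw : w \in [set x; y] by rewrite E set22.
move: hx hy hu hw => /set2P [] -> /set2P [] -> /set2P [] hu /set2P [] hw; subst; auto.
Qed.

Lemma in_Bq n (q : 'I_n -> nat) l j : (lift ord0 j \in Bq q l) = (q j == l).
Proof. by rewrite inE liftK. Qed.

Lemma Bq_inv n (q : 'I_n -> nat) l v : v \in Bq q l -> exists2 j, v = lift ord0 j & q j = l.
Proof.
rewrite inE; case: unliftP => [j ->|//] /eqP h; by exists j.
Qed.

Section QTree.
Variable n : nat.
Local Notation V := 'I_n.+1.
Variable X : seq V.
Variable q : 'I_n -> nat.
Hypothesis hX : uniq X.
Hypothesis hsz : size X = n.+1.
Hypothesis h0 : nth ord0 X 0 = ord0.
Hypothesis hq : forall j, q j < index (lift ord0 j) X.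

Lemma memX v : v \in X.
Proof.
apply/negPn/negP => hv.
have : uniq (v :: X) by rewrite /= hv hX.
move/card_uniqP => /= e.
have := max_card (mem (v :: X)); rewrite e card_ord hsz; lia.
Qed.

Lemma idx_lt v : index v X < n.+1.
Proof. by move: (memX v); rewrite -index_mem hsz. Qed.

Lemma nthX_idx v : nth ord0 X (index v X) = v.
Proof. by rewrite nth_index ?memX. Qed.

Lemma idx_nth i : i < n.+1 -> index (nth ord0 X i) X = i.
Proof. by move=> hi; rewrite index_uniq ?hsz. Qed.

Lemma qlt j : q j < n.+1.
Proof. have := hq j; have := idx_lt (lift ord0 j); lia. Qed.

Lemma nth_inj i i' : i < n.+1 -> i' < n.+1 -> nth ord0 X i = nth ord0 X i' -> i = i'.
Proof. by move=> hi hi' e; rewrite -(idx_nth hi) -(idx_nth hi') e. Qed.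

Lemma mem_takeX s y : (y \in take s X) = (index y X < s).
Proof.
apply/idP/idP.
  move=> /nthP => /(_ ord0) [i hi <-].
  have [h1 h2] : i < s /\ i < n.+1 by move: hi; rewrite size_take hsz; case: ifP; lia.
  by rewrite nth_take // idx_nth.
move=> hs; rewrite -(nthX_idx y) -(nth_take _ hs); apply: mem_nth.
rewrite size_take hsz; have := idx_lt y; case: ifP; lia.
Qed.

Definition EE := Eq X q.

Lemma adjE x y : adj EE x y = [exists j, [set x; y] == [set lift ord0 j; nth ord0 X (q j)]].
Proof.
rewrite /adj /EE /Eq; apply/imsetP/existsP => [[j _ /eqP e]|[j /eqP e]]; by exists j.
Qed.

Lemma adj_prefix s l y : l < s -> s <= n.+1 ->
  (adj EE (nth ord0 X l) y && (y \notin take s X)) = ((y \in Bq q l) && (y \notin take s X)).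
Proof.
move=> hl hs; rewrite adjE.
apply/andP/andP => [[/existsP [j /eqP e] hy]|[hb hy]]; split => //.
  case: (pair_eq e) => [[e1 e2]|[e1 e2]].
    exfalso; move: hy; rewrite mem_takeX e2 idx_nth ?qlt //.
    have := hq j; rewrite -e1 idx_nth; lia.
  have := nth_inj (leq_trans hl hs) (qlt j) e1 => el.
  by rewrite e2 in_Bq el.
have [j -> hj] := Bq_inv hb.
apply/existsP; exists j; by rewrite hj setUC.
Qed.

Lemma conn_all i : i < n.+1 -> connect (adj EE) ord0 (nth ord0 X i).
Proof.
elim: i {-2}i (leqnn i) => [|m IH] i hi hn.
  by move: hi; rewrite leqn0 => /eqP ->; rewrite h0 connect0.
case: (unliftP ord0 (nth ord0 X i)) => [j ev'|ev'].
  apply: (connect_trans (y := nth ord0 X (q j))).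
    apply: IH; last exact: qlt.
    have := hq j; rewrite -ev' idx_nth //; lia.
  apply: connect1; rewrite adjE; apply/existsP; exists j; by rewrite ev' setUC.
by rewrite ev'; exact: connect0.
Qed.

Lemma EE_tree : EE \in trees n.
Proof.
rewrite inE /is_tree -andbA; apply/and3P; split.
- apply/forall_inP => e /imsetP [j _ ->]; rewrite cards2.
  suff -> : lift ord0 j != nth ord0 X (q j) by [].
  apply/eqP => e1; have := hq j; rewrite e1 idx_nth ?qlt //; lia.
- apply/forallP => v; rewrite -(nthX_idx v); apply: conn_all; exact: idx_lt.
- apply/eqP; rewrite /EE /Eq card_imset ?card_ord //.
  move=> j j' /pair_eq [[/lift_inj //]|[e1 e2]].
  have := hq j; have := hq j'; rewrite e1 -e2 !idx_nth ?qlt //; lia.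
Qed.

End QTree.

Lemma EE_inj n (X : seq 'I_n.+1) q1 q2 : uniq X -> size X = n.+1 ->
  (forall j, q1 j < index (lift ord0 j) X) -> (forall j, q2 j < index (lift ord0 j) X) ->
  Eq X q1 = Eq X q2 -> forall j, q1 j = q2 j.
Proof.
move=> hX hsz hq1 hq2 e j.
have : [set lift ord0 j; nth ord0 X (q1 j)] \in Eq X q2 by rewrite -e; apply: imset_f.
move=> /imsetP [j' _ /pair_eq [[/lift_inj <- e2]|[e1 e2]]].
  exact: (nth_inj hX hsz (qlt hX hsz hq1 j) (qlt hX hsz hq2 j)).
have := hq1 j; have := hq2 j'; rewrite e1 -e2 !(idx_nth hX hsz) ?(qlt hX hsz hq1) ?(qlt hX hsz hq2) //; lia.
Qed.


Lemma ordr_grow n (ch : seq 'I_n.+1 -> nat -> {set 'I_n.+1}) k k' : k <= k' ->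
  size (ordr ch k') <= size (ordr ch k) + (k' - k).
Proof.
elim: k' => [|k' IH]; first by rewrite leqn0 => /eqP ->; rewrite subnn addn0.
rewrite leq_eqVlt => /orP [/eqP ->|]; first lia.
rewrite ltnS => hk; have h := IH hk; rewrite /=; case: nextv => [v|]; rewrite ?size_rcons; lia.
Qed.

Lemma full_down n (ch : seq 'I_n.+1 -> nat -> {set 'I_n.+1}) N i :
  size (ordr ch N) = N.+1 -> i <= N -> size (ordr ch i) = i.+1.
Proof.
move=> hN hi; have := ordr_grow ch hi; have := ordr_size ch i; lia.
Qed.

Lemma ordr_take n (ch : seq 'I_n.+1 -> nat -> {set 'I_n.+1}) N i :
  size (ordr ch N) = N.+1 -> i <= N -> ordr ch i = take i.+1 (ordr ch N).
Proof.
move=> hN hi; have [t ->] := ordr_prefix ch hi.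
by rewrite -(full_down hN hi) take_size_cat.
Qed.

Section Leg.
Variable n : nat.
Local Notation V := 'I_n.+1.
Variable q : 'I_n -> nat.
Definition chq : seq V -> nat -> {set V} := fun _ l => Bq q l.
Local Notation X := (ordr chq n).
Hypothesis hfull : size X = n.+1.
Hypothesis hq : forall j, q j < index (lift ord0 j) X.
Variable k : nat.
Hypothesis hk1 : forall l, l < k -> exists j, q j = l.
Hypothesis hk2 : forall j, q j != k.

Let hX : uniq X := ordr_uniq chq n.
Let h0 : nth ord0 X 0 = ord0 := ordr_head chq n.

Lemma k_le : k <= n.
Proof.
case: k hk1 => // k' h; have [j hj] := h k' (ltnSn _).
have := hq j; have := idx_lt hX hfull (lift ord0 j); lia.
Qed.

Lemma cand_eq i : i <= n ->
  [seq y <- enum V | adj (Eq X q) (nth ord0 X i) y && (y \notin rev (take i.+1 X))]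
  = [seq y <- enum V | (y \in Bq q i) && (y \notin take i.+1 X)].
Proof.
move=> hi; apply: eq_filter => y; rewrite mem_rev.
have := @adj_prefix n X q hX hfull hq i.+1 i y; rewrite /EE; apply; lia.
Qed.

Lemma leg_main d : forall i fuel, i + d = k -> d <= fuel ->
  dfs_first_branch (Eq X q) fuel (nth ord0 X i) (rev (take i.+1 X)) = d.
Proof.
have kn := k_le.
elim: d => [|d IH] i fuel hid hf.
  rewrite addn0 in hid; subst i.
  have E : [seq y <- enum V | adj (Eq X q) (nth ord0 X k) y && (y \notin rev (take k.+1 X))] = [::].
    rewrite cand_eq //; apply/eqP; rewrite -[_ == _]negbK -has_filter; apply/hasPn => y _.
    apply/negP => /andP [/Bq_inv [j _ hj] _]; by move: (hk2 j); rewrite hj eqxx.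
  by case: fuel hf => [|f] _ //=; rewrite E.
have hi : i < k by lia.
case: fuel hf => [|f] hf //=.
rewrite cand_eq; last lia.
have hs1 : size (ordr chq i.+1) = i.+2 by apply: full_down hfull _; lia.
have hs0 : size (ordr chq i) = i.+1 by apply: full_down hfull _; lia.
have [m [s1 s2 s3 s4 s5]] := ordr_step hs1 hs0.
have eqi : ordr chq i = take i.+1 X by apply: ordr_take hfull _; lia.
have nb : nbX chq (ordr chq i) i.
  have [j hj] := hk1 hi; apply/existsP; exists (lift ord0 j).
  rewrite /chq in_Bq hj eqxx /= eqi (mem_takeX hX hfull); have := hq j; rewrite hj; lia.
move: s1; rewrite /= nb => -[em]; subst m.
move: s3 s4; rewrite /candl /chq eqi => s3 s4.
case EL: [seq y <- enum V | (y \in Bq q i) && (y \notin take i.+1 X)] => [|c cs].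
  by move: s4 s5; rewrite eqi => s4 s5; have := mem_filter; move: EL => /eqP; rewrite -[_ == _]negbK -has_filter => /hasPn /(_ (nth ord0 (ordr chq i.+1) i.+1)); rewrite mem_enum s4 s5 => /(_ isT).
have e2 : last c cs = nth ord0 X i.+1.
  rewrite (@ordr_nth _ chq i.+1 n i.+1); [|lia|by rewrite hs1].
  by rewrite s3 EL.
rewrite e2; congr S.
rewrite -rev_rcons -take_nth ?hfull; last lia.
apply: IH; lia.
Qed.

Lemma leg_q : leg (Eq X q) = k.
Proof.
rewrite /leg.
have -> : [:: ord0] = rev (take 1 X).
  rewrite (take_nth ord0 (n:=0)); last by rewrite hfull.
  by rewrite take0 h0.
rewrite -{1}h0; apply: leg_main => //; have := k_le; lia.
Qed.

End Leg.


Definition chE n (E : graph n) : seq 'I_n.+1 -> nat -> {set 'I_n.+1} :=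
  fun X l => [set y | adj E (nth ord0 X l) y].

Lemma ordr_congr n (ch1 ch2 : seq 'I_n.+1 -> nat -> {set 'I_n.+1}) :
  (forall X l, ch1 X l = ch2 X l) -> forall k, ordr ch1 k = ordr ch2 k.
Proof.
move=> H k; apply: (@ordr_ext _ _ _ k) => // k' _ l _ y; by rewrite H.
Qed.

Lemma chq_congr n (q1 q2 : 'I_n -> nat) : (forall j, q1 j = q2 j) ->
  forall X l, chq q1 X l = chq q2 X l.
Proof.
move=> H X l; apply/setP => v; rewrite /chq !inE; case: unliftP => // j _; by rewrite H.
Qed.

Lemma Eq_congr n X (q1 q2 : 'I_n -> nat) : (forall j, q1 j = q2 j) -> Eq X q1 = Eq X q2.
Proof. by move=> H; apply: eq_imset => j; rewrite H. Qed.

Lemma lift_ne0 n (j : 'I_n) : lift ord0 j != ord0.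
Proof. by apply/eqP => /(congr1 val). Qed.

Lemma full_disc n (ch : seq 'I_n.+1 -> nat -> {set 'I_n.+1}) p :
  size (ordr ch n) = n.+1 -> 0 < p -> p <= n ->
  exists m, [/\ srch ch (ordr ch p.-1) p = Some m, m < p &
     nth ord0 (ordr ch n) p \in ch (ordr ch p.-1) m].
Proof.
move=> hf hp hpn; case: p hp hpn => // i _ hi.
have hs1 : size (ordr ch i.+1) = i.+2 by apply: full_down hf _.
have hs0 : size (ordr ch i) = i.+1 by apply: full_down hf _; lia.
have [m [s1 s2 s3 s4 s5]] := ordr_step hs1 hs0.
exists m; split => //.
by rewrite (@ordr_nth _ ch i.+1 n i.+1) // hs1.
Qed.

Lemma full_hq n (q : 'I_n -> nat) : size (ordr (chq q) n) = n.+1 ->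
  forall j, q j < index (lift ord0 j) (ordr (chq q) n).
Proof.
move=> hf j.
have hX := ordr_uniq (chq q) n.
have h0 := ordr_head (chq q) n.
set p := index (lift ord0 j) (ordr (chq q) n).
have hp : p < n.+1 by apply: idx_lt.
have hp0 : 0 < p.
  rewrite lt0n; apply/eqP => e; have := nthX_idx hX hf (lift ord0 j).
  by rewrite -/p e h0 => /eqP; rewrite eq_sym (negbTE (lift_ne0 _)).
have [m [_ hm hin]] := full_disc hf hp0 hp.
move: hin; rewrite /p (nthX_idx hX hf) /chq in_Bq => /eqP ->; exact hm.
Qed.

Lemma chq_chE n (q : 'I_n -> nat) : size (ordr (chq q) n) = n.+1 ->
  forall k, k <= n -> ordr (chq q) k = ordr (chE (Eq (ordr (chq q) n) q)) k.
Proof.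
move=> hf; apply: ordr_ext => k hk l hl y.
have hX := ordr_uniq (chq q) n.
have hq := full_hq hf.
have hs : size (ordr (chq q) k) = k.+1 by apply: full_down hf _; lia.
rewrite (ordr_take hf (ltnW hk)) /chE [in X in _ = X]inE nth_take; last by rewrite -hs.
rewrite hs in hl.
have := @adj_prefix n _ q hX hf hq k.+1 l y hl (ltnW hk); rewrite /EE => ->.
by rewrite /chq.
Qed.


Definition qa n (a : {ffun 'I_n -> 'I_n.+1}) : 'I_n -> nat := fun j => (a j : nat).-1.
Definition Phi n (a : {ffun 'I_n -> 'I_n.+1}) : graph n := Eq (ordr (chq (qa a)) n) (qa a).
Definition Kf n (a : {ffun 'I_n -> 'I_n.+1}) : nat :=
  find (fun l => [forall j, (a j : nat) != l.+1]) (iota 0 n.+1).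

Section PF.
Variable n : nat.
Variable a : {ffun 'I_n -> 'I_n.+1}.
Hypothesis ha : a \in parking_functions n.

Lemma PF_pos j : 0 < a j.
Proof. by move: ha; rewrite inE => /andP [/forallP h _]. Qed.

Lemma PF_cnt i : 0 < i -> i <= n -> i <= #|[set j | (a j : nat) <= i]|.
Proof.
move=> h1 h2; move: ha; rewrite inE => /andP [_ /forallP /(_ (Ordinal (n:=n.+1) (m:=i) h2)) /implyP].
by apply.
Qed.

Lemma PF_full : size (ordr (chq (qa a)) n) = n.+1.
Proof.
apply: (@ordr_full _ _ n) => // k hk hs.
set P := ordr (chq (qa a)) k.
case: (boolP [exists m : 'I_k.+1, nbX (chq (qa a)) P m]) => [/existsP [m hm]|hno].
  by exists m.
exfalso.
have hc := PF_cnt (ltn0Sn k) hk.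
have hsub : lift ord0 @: [set j | (a j : nat) <= k.+1] \subset [predD1 P & ord0].
  apply/subsetP => v /imsetP [j]; rewrite inE => hj ->.
  rewrite inE /=.
  apply/negPn/negP => hn.
  have hlt : qa a j < k.+1 by rewrite /qa; have := PF_pos j; lia.
  move/existsPn: hno => /(_ (Ordinal hlt)) /existsP; apply.
  exists (lift ord0 j); by rewrite /chq in_Bq eqxx hn.
have := subset_leq_card hsub; rewrite card_imset; last exact: lift_inj.
have hP : #|P| = k.+1 by rewrite -hs; apply/card_uniqP; exact: ordr_uniq.
have h0P : ord0 \in P by rewrite -(ordr_head (chq (qa a)) k); apply: mem_nth; rewrite hs.
have := cardD1 ord0 (mem P); rewrite h0P hP add1n => -[e1] e2.
have : #|[set j | (a j : nat) <= k.+1]| <= k by rewrite {2}e1.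
lia.
Qed.

Lemma PF_hq j : qa a j < index (lift ord0 j) (ordr (chq (qa a)) n).
Proof. exact: full_hq PF_full j. Qed.

Lemma Phi_tree : Phi a \in trees n.
Proof.
apply: EE_tree; [exact: ordr_uniq|exact: PF_full|exact: ordr_head|exact: PF_hq].
Qed.

Lemma K_lt : Kf a < n.+1.
Proof.
have : has (fun l => [forall j, (a j : nat) != l.+1]) (iota 0 n.+1).
  apply/hasP; exists n; first by rewrite mem_iota; lia.
  apply/forallP => j; have := ltn_ord (a j); lia.
by rewrite has_find size_iota.
Qed.

Lemma Phi_leg : leg (Phi a) = Kf a.
Proof.
apply: leg_q; [exact: PF_full|exact: PF_hq| |].
  move=> l hl.
  have hl' : l < size (iota 0 n.+1) by rewrite size_iota; have := K_lt; lia.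
  have := before_find 0 hl; rewrite nth_iota; last by rewrite size_iota in hl'.
  move=> /forallPn [j]; rewrite negbK => /eqP e; exists j; by rewrite /qa e.
move=> j.
have := nth_find 0 (a := fun l => [forall j, (a j : nat) != l.+1]) (s := iota 0 n.+1).
rewrite has_find size_iota -/(Kf a) => /(_ K_lt).
rewrite nth_iota ?K_lt // add0n => /forallP /(_ j).
rewrite /qa; have := PF_pos j; lia.
Qed.

End PF.



Lemma Phi_inj n : {in parking_functions n &, injective (@Phi n)}.
Proof.
move=> a b ha hb e.
have ea := chq_chE (PF_full ha) (leqnn n).
have eb := chq_chE (PF_full hb) (leqnn n).
have eX : ordr (chq (qa a)) n = ordr (chq (qa b)) n.
  by rewrite ea eb; move: e; rewrite /Phi => ->.
have hqb := PF_hq hb; rewrite -eX in hqb.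
have := EE_inj (ordr_uniq _ n) (PF_full ha) (PF_hq ha) hqb.
move: e; rewrite /Phi -eX => e /(_ e) h.
apply/ffunP => j; apply/val_inj => /=.
have := h j; rewrite /qa; have := PF_pos ha j; have := PF_pos hb j; lia.
Qed.

Lemma path_cross (T : eqType) (e : rel T) (P : pred T) x p :
  P x -> path e x p -> ~~ P (last x p) -> exists u w, [/\ P u, ~~ P w & e u w].
Proof.
elim: p x => [|y p IH] x hx /=; first by rewrite hx.
move=> /andP [hxy hp] hl.
case hy: (P y); first exact: IH hy hp hl.
by exists x, y; rewrite hx hy hxy.
Qed.

Section Surj.
Variable n : nat.
Local Notation V := 'I_n.+1.
Variable E : graph n.
Hypothesis hE : E \in trees n.
Local Notation Y := (ordr (chE E) n).

Lemma tree_conn v : connect (adj E) ord0 v.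
Proof. by move: hE; rewrite inE /is_tree -andbA => /and3P [_ /forallP h _]. Qed.

Lemma tree_card : #|E| = n.
Proof. by move: hE; rewrite inE /is_tree -andbA => /and3P [_ _ /eqP h]. Qed.

Lemma Y_full : size Y = n.+1.
Proof.
apply: (@ordr_full _ _ n) => // k hk hs.
set P := ordr (chE E) k.
have hP : #|P| = k.+1 by rewrite -hs; apply/card_uniqP; exact: ordr_uniq.
have h0P : ord0 \in P by rewrite -(ordr_head (chE E) k); apply: mem_nth; rewrite hs.
case: (pickP (fun w => w \notin P)) => [w hw|hall]; last first.
  exfalso; have : #|'I_n.+1| <= #|P|.
    by apply: subset_leq_card; apply/subsetP => x _; move: (hall x) => /= /negbFE.
  rewrite card_ord hP; lia.
have /connectP [p hp hl] := tree_conn w.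
have := @path_cross _ (adj E) (fun x => x \in P) ord0 p h0P hp; rewrite -hl => /(_ hw) [u [w' [hu hw' he]]].
exists (index u P); first by rewrite -hs index_mem.
apply/existsP; exists w'; by rewrite /chE inE nth_index // he.
Qed.

Definition qE (j : 'I_n) : nat :=
  let p := index (lift ord0 j) Y in odflt 0 (srch (chE E) (ordr (chE E) p.-1) p).

Let hY : uniq Y := ordr_uniq _ n.
Let hY0 : nth ord0 Y 0 = ord0 := ordr_head _ n.

Lemma qE_spec j : qE j < index (lift ord0 j) Y /\
  [set nth ord0 Y (qE j); lift ord0 j] \in E.
Proof.
set p := index (lift ord0 j) Y.
have hp : p < n.+1 by apply: idx_lt hY Y_full _.
have hp0 : 0 < p.
  rewrite lt0n; apply/eqP => e; have := nthX_idx hY Y_full (lift ord0 j).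
  by rewrite -/p e hY0 => /eqP; rewrite eq_sym (negbTE (lift_ne0 _)).
have [m [s1 hm hin]] := full_disc Y_full hp0 hp.
have -> : qE j = m by rewrite /qE -/p s1.
split => //.
move: hin; rewrite /p (nthX_idx hY Y_full) /chE inE.
have hs : size (ordr (chE E) p.-1) = p by have := full_down Y_full (i := p.-1); lia.
by rewrite (@ordr_nth _ _ p.-1 n m) ?hs //; lia.
Qed.

Lemma qE_hq j : qE j < index (lift ord0 j) Y.
Proof. by case: (qE_spec j). Qed.

Lemma EqY : Eq Y qE = E.
Proof.
apply/eqP; rewrite eqEcard; apply/andP; split.
  apply/subsetP => e /imsetP [j _ ->]; rewrite setUC; by case: (qE_spec j).
have := EE_tree hY Y_full hY0 qE_hq; rewrite inE /is_tree => /andP [_ /eqP ->].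
by rewrite tree_card.
Qed.

Definition aE : {ffun 'I_n -> 'I_n.+1} := [ffun j => inord (qE j).+1].

Lemma aE_val j : (aE j : nat) = (qE j).+1.
Proof.
rewrite ffunE inordK //; have := qE_hq j; have := idx_lt hY Y_full (lift ord0 j); lia.
Qed.

Lemma aE_PF : aE \in parking_functions n.
Proof.
rewrite inE; apply/andP; split; first by apply/forallP => j; rewrite aE_val.
apply/forallP => i; apply/implyP => hi.
set W' := [set j | index (lift ord0 j) Y <= i].
have hW : W' \subset [set j | (aE j : nat) <= i].
  apply/subsetP => j; rewrite !inE aE_val => h; have := qE_hq j; lia.
apply: leq_trans (subset_leq_card hW).
rewrite -(card_imset _ (@lift_inj _ ord0)).
set T := take i.+1 Y.
have hT : uniq T by apply: take_uniq.
have hTs : #|T| = i.+1.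
  rewrite (card_uniqP hT) size_take Y_full; have := ltn_ord i; case: ifP; lia.
have h0T : ord0 \in T.
  by rewrite /T (mem_takeX hY Y_full); have := idx_nth hY Y_full (ltn0Sn n); rewrite hY0 => ->.
have hsub : [predD1 T & ord0] \subset lift ord0 @: W'.
  apply/subsetP => v; rewrite inE /= => /andP [hv hvT].
  case: (unliftP ord0 v) => [j ev|ev]; last by move: hv; rewrite ev eqxx.
  by apply/imsetP; exists j => //; rewrite inE -ev -ltnS -(mem_takeX hY Y_full).
have := subset_leq_card hsub.
have := cardD1 ord0 (mem T); rewrite h0T hTs add1n => -[<-]; done.
Qed.

Lemma Phi_aE : Phi aE = E.
Proof.
have eq1 : forall j, qa aE j = qE j by move=> j; rewrite /qa aE_val.
rewrite /Phi (ordr_congr (chq_congr eq1)) (Eq_congr _ eq1).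
have -> : ordr (chq qE) n = Y.
  symmetry; apply: (@ordr_ext _ _ _ n) => // k hk l hl y.
  have hs : size (ordr (chE E) k) = k.+1 by apply: full_down Y_full _; lia.
  rewrite (ordr_take Y_full (ltnW hk)) /chE [in X in X = _]inE nth_take; last by rewrite -hs.
  rewrite hs in hl.
  have := @adj_prefix n _ qE hY Y_full qE_hq k.+1 l y hl (ltnW hk); rewrite /EE EqY => ->.
  by rewrite /chq.
exact: EqY.
Qed.

End Surj.

Section Zchar.
Variable n : nat.

Lemma cnt_step (A : {set 'I_n}) (x : 'I_n) :
  #|[set y in A | (y : nat) < x.+1]| = #|[set y in A | (y : nat) < x]| + (x \in A).
Proof.
case hx: (x \in A).
  have -> : [set y in A | (y : nat) < x.+1] = x |: [set y in A | (y : nat) < x].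
    apply/setP => y; rewrite !inE ltnS leq_eqVlt val_eqE.
    by case: (eqVneq y x) => [->|_] /=; rewrite ?hx ?ltnn ?andbT // andbC.
  by rewrite cardsU1 inE ltnn andbF addnC.
rewrite addn0; apply: eq_card => y; rewrite !inE ltnS leq_eqVlt val_eqE.
by case: (eqVneq y x) => [->|_] /=; rewrite ?hx ?ltnn.
Qed.

Lemma cnt_all (A : {set 'I_n}) : [set y in A | (y : nat) < n] = A.
Proof. by apply/setP => y; rewrite !inE ltn_ord andbT. Qed.

Lemma cnt_le (A : {set 'I_n}) t : #|[set y in A | (y : nat) < t]| <= #|A|.
Proof. by apply: subset_leq_card; apply/subsetP => y; rewrite inE => /andP []. Qed.

Definition charS (c : {ffun 'I_n -> 'I_n.+1}) (S : {set 'I_n}) :=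
  forall j : 'I_n, (j \in S) = ((c j : nat) <= #|[set s in S | (s : nat) < j]|.+1).

Lemma char_uniq c S1 S2 : charS c S1 -> charS c S2 -> S1 = S2.
Proof.
move=> h1 h2.
suff H : forall t, t <= n -> [set y in S1 | (y : nat) < t] = [set y in S2 | (y : nat) < t].
  by rewrite -(cnt_all S1) -(cnt_all S2) H.
elim => [|t IH] ht.
  by apply/setP => y; rewrite !inE ltn0 !andbF.
have e := IH (ltnW ht).
have hx : (Ordinal ht \in S1) = (Ordinal ht \in S2) by rewrite h1 h2 /= e.
apply/setP => y; rewrite !inE ltnS leq_eqVlt.
case: (eqVneq (y : nat) t) => [ey|ne] /=.
  have -> : y = Ordinal ht by apply/val_inj.
  by rewrite !andbT hx.
by move: e => /setP /(_ y); rewrite !inE.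
Qed.

Lemma zbound c S (X : {set 'I_n}) : charS c S -> center_ok c X -> #|X| <= #|S|.
Proof.
move=> h hX.
suff H : forall t, t <= n -> #|[set y in X | (y : nat) < t]| <= #|[set y in S | (y : nat) < t]|.
  by have := H n (leqnn n); rewrite !cnt_all.
elim => [|t IH] ht.
  by rewrite (_ : [set y in X | (y : nat) < 0] = set0) ?cards0 //; apply/setP => y; rewrite !inE ltn0 andbF.
have e := IH (ltnW ht).
have := cnt_step X (Ordinal ht); have := cnt_step S (Ordinal ht); rewrite /= => -> ->.
case hxX: (Ordinal ht \in X); case hxS: (Ordinal ht \in S) => /=; rewrite ?addn0 ?addn1.
- by [].
2: by apply: leq_trans e _.
2: by [].
exfalso; move: hxS; rewrite h /=.
move: hX => /forall_inP /(_ _ hxX).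
have -> : [set y in X | y <= Ordinal ht] = [set y in X | (y : nat) < t.+1] by apply/setP => y; rewrite !inE.
have := cnt_step X (Ordinal ht); rewrite /= hxX addn1 => -> h1.
suff -> : (c (Ordinal ht) <= #|[set s in S | (s : nat) < t]|.+1) = true by [].
by apply: leq_trans h1 _; rewrite ltnS.
Qed.

Lemma zchar c S : charS c S -> zcenter c = #|S|.
Proof.
move=> h; apply/eqP; rewrite eqn_leq; apply/andP; split; last first.
  rewrite /zcenter; apply: (@leq_bigmax_cond _ (center_ok c) (fun X => #|X|) S).
  apply/forall_inP => x hx.
  have -> : [set y in S | y <= x] = [set y in S | (y : nat) < x.+1].
    by apply/setP => y; rewrite !inE.
  have := cnt_step S x; rewrite hx addn1 => ->; by rewrite -h.
rewrite /zcenter; apply/bigmax_leqP => X hX; exact: zbound.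
Qed.

End Zchar.


Lemma card_split (T : finType) (A : {set T}) (p : pred T) :
  #|A| = #|[set x in A | p x]| + #|[set x in A | ~~ p x]|.
Proof.
rewrite -(cardsID [set x | p x] A); congr (_ + _); apply: eq_card => x; rewrite !inE; by case: (x \in A); case: (p x).
Qed.

Definition Mx n (a : {ffun 'I_n -> 'I_n.+1}) (j : 'I_n) : 'I_n :=
  [arg max_(i > j | a i == a j) (i : nat)].
Definition Sa_def n (a : {ffun 'I_n -> 'I_n.+1}) : {set 'I_n} :=
  [set j | ((a j : nat) <= Kf a) && [forall i, (a i == a j) ==> (i <= j)]].
Fact Sa_key : unit. Proof. by []. Qed.
Definition Sa n a := locked_with Sa_key (@Sa_def n a).
Lemma inSa n a j : (j \in @Sa n a) = ((a j : nat) <= Kf a) && [forall i, (a i == a j) ==> (i <= j)].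
Proof. by rewrite /Sa locked_withE /Sa_def inE. Qed.
Definition phiv n (a : {ffun 'I_n -> 'I_n.+1}) (j : 'I_n) : nat :=
  if j \in Sa a then (#|[set s in Sa a | ((s : nat) < j) && ((a s : nat) < a j)]|).+1
  else if (a j : nat) <= Kf a then (#|[set s in Sa a | (s : nat) <= Mx a j]|).+1
  else (a j : nat).
Definition phi n (a : {ffun 'I_n -> 'I_n.+1}) : {ffun 'I_n -> 'I_n.+1} :=
  [ffun j => inord (phiv a j)].

Section Phi2.
Variable n : nat.
Variable a : {ffun 'I_n -> 'I_n.+1}.
Hypothesis ha : a \in parking_functions n.
Local Notation K := (Kf a).
Local Notation S := (Sa a).

Lemma K_hit v : 0 < v -> v <= K -> exists j, (a j : nat) = v.
Proof.
move=> h1 h2.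
have hl : v.-1 < find (fun l => [forall j, (a j : nat) != l.+1]) (iota 0 n.+1) by rewrite -/(Kf a); lia.
have := before_find 0 hl; rewrite nth_iota; last by have := K_lt ha; rewrite /Kf; lia.
move=> /forallPn [j]; rewrite negbK add0n => /eqP e; exists j; lia.
Qed.

Lemma K_miss j : (a j : nat) != K.+1.
Proof.
have := nth_find 0 (a := fun l => [forall j, (a j : nat) != l.+1]) (s := iota 0 n.+1).
rewrite has_find size_iota -/(Kf a) => /(_ (K_lt ha)).
by rewrite nth_iota ?(K_lt ha) // add0n => /forallP /(_ j).
Qed.

Lemma Mx_spec j : [/\ a (Mx a j) = a j, j <= Mx a j & forall i, a i = a j -> i <= Mx a j].
Proof.
rewrite /Mx; case: arg_maxnP => [|i /eqP hi hmax]; first exact: eqxx.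
split => //; first exact: hmax.
by move=> i' e; apply: hmax; rewrite e.
Qed.

Lemma S_Mx j : (a j : nat) <= K -> Mx a j \in S.
Proof.
have [e1 _ e3] := Mx_spec j; move=> hj.
rewrite inSa e1 hj /=; apply/forallP => i; apply/implyP => /eqP e; apply: e3; exact: e.
Qed.

Lemma S_le s : s \in S -> (a s : nat) <= K.
Proof. by rewrite inSa => /andP []. Qed.

Lemma S_max s i : s \in S -> a i = a s -> (i : nat) <= s.
Proof. by rewrite inSa => /andP [_ /forallP h] e; move: (h i); rewrite e eqxx. Qed.

Lemma S_inj s s' : s \in S -> s' \in S -> a s = a s' -> s = s'.
Proof.
move=> h h' e; apply/val_inj/eqP; rewrite eqn_leq.
by rewrite (S_max h (esym e)) (S_max h' e).
Qed.

Lemma notS_lt j : j \notin S -> (a j : nat) <= K -> (j : nat) < Mx a j.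
Proof.
move=> hn hk; have [_ e2 _] := Mx_spec j.
rewrite ltn_neqAle e2 andbT; apply/negP => /eqP e.
have : Mx a j = j by apply/val_inj.
move=> e'; move: (S_Mx hk); rewrite e'; by rewrite (negbTE hn).
Qed.

Lemma pos j : 0 < (a j : nat).
Proof. exact: PF_pos. Qed.

Lemma cntS v : v <= K.+1 -> #|[set s in S | (a s : nat) < v]| = v.-1.
Proof.
elim: v => [|v IH] hv.
  by apply/eqP; rewrite cards_eq0; apply/eqP/setP => s; rewrite !inE ltn0 andbF.
case: v IH hv => [|v] IH hv.
  apply/eqP; rewrite cards_eq0; apply/eqP/setP => s; rewrite !inE.
  by have := pos s; case: (s \in S) => //=; lia.
have hvK : v.+1 <= K by lia.
have [j hj] := K_hit (ltn0Sn v) hvK.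
have hjK : (a j : nat) <= K by rewrite hj.
have hM := S_Mx hjK.
have [e1 _ _] := Mx_spec j.
have -> : [set s in S | (a s : nat) < v.+2] = Mx a j |: [set s in S | (a s : nat) < v.+1].
  apply/setP => s; rewrite !inE ltnS leq_eqVlt.
  case: (eqVneq s (Mx a j)) => [->|ne] /=; first by rewrite hM e1 hj eqxx.
  case hs: (s \in S) => //=.
  case: (eqVneq (a s : nat) v.+1) => //= e.
  by move: ne; rewrite (S_inj hs hM) ?eqxx //; apply/val_inj; rewrite /= e1 e hj.
rewrite (cardsU1 (Mx a j)) IH; last lia.
by rewrite inE e1 hj ltnn andbF.
Qed.

Lemma cardS : #|S| = K.
Proof.
have := cntS (leqnn K.+1); rewrite /= => <-.
apply: eq_card => s; rewrite !inE; case hs: (s \in S) => //=; have := S_le hs; lia.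
Qed.

Lemma phiv_S j : j \in S -> phiv a j <= #|[set s in S | (s : nat) < j]|.+1.
Proof.
move=> hj; rewrite /phiv hj ltnS; apply: subset_leq_card; apply/subsetP => s.
by rewrite !inE => /andP [-> /andP [-> _]].
Qed.

Lemma phiv_S_K j : j \in S -> phiv a j <= K.
Proof.
move=> hj; rewrite /phiv hj -cardS (cardsD1 j S) hj add1n ltnS.
apply: subset_leq_card; apply/subsetP => s; rewrite !inE => /andP [-> /andP [h _]].
rewrite andbT; apply/eqP => e; by rewrite e ltnn in h.
Qed.

Lemma K_lt_n j : j \notin S -> (a j : nat) <= K -> K < n.
Proof.
move=> hn _; have := max_card (mem (j |: S)); rewrite cardsU1 hn cardS card_ord; lia.
Qed.

Lemma phiv_nS j : j \notin S -> (a j : nat) <= K ->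
   #|[set s in S | (s : nat) < j]|.+2 <= phiv a j /\ phiv a j <= K.+1.
Proof.
move=> hn hk; rewrite /phiv (negbTE hn) hk; split.
  rewrite ltnS; have hM := S_Mx hk; have hlt := notS_lt hn hk.
  have : Mx a j |: [set s in S | (s : nat) < j] \subset [set s in S | (s : nat) <= Mx a j].
    apply/subsetP => s; rewrite !inE => /orP [/eqP ->|/andP [-> h]]; first by rewrite hM leqnn.
    rewrite /=; lia.
  move/subset_leq_card; rewrite cardsU1 inE.
  have -> : (Mx a j \in S) && ((Mx a j : nat) < j) = false by rewrite ltnNge ltnW ?andbF.
  by rewrite add1n.
rewrite ltnS -cardS; apply: subset_leq_card; apply/subsetP => s; by rewrite inE => /andP [].
Qed.

Lemma phiv_big j : K < (a j : nat) -> phiv a j = a j /\ K.+2 <= a j.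
Proof.
move=> h; have hn : j \notin S by apply/negP => /S_le; lia.
rewrite /phiv (negbTE hn) leqNgt h /=; split => //.
have := K_miss j; lia.
Qed.

Lemma phiv_le j : phiv a j <= n.
Proof.
case hS: (j \in S); first by have := phiv_S_K hS; have := K_lt ha; lia.
case hk: ((a j : nat) <= K).
  have := phiv_nS (negbT hS) hk; have := K_lt_n (negbT hS) hk; lia.
have hk' : K < a j by move/negbT: hk; rewrite -ltnNge.
have [-> _] := phiv_big hk'; have := ltn_ord (a j); lia.
Qed.

Lemma phi_val j : (phi a j : nat) = phiv a j.
Proof. by rewrite ffunE inordK // ltnS phiv_le. Qed.

Lemma phi_char : charS (phi a) S.
Proof.
move=> j; rewrite phi_val.
case hS: (j \in S); first by rewrite phiv_S.
symmetry; apply/negbTE; rewrite -ltnNge.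
case hk: ((a j : nat) <= K); first by case: (phiv_nS (negbT hS) hk).
have hk' : K < a j by move/negbT: hk; rewrite -ltnNge.
have [-> h2] := phiv_big hk'.
have := cnt_le S j; rewrite cardS; lia.
Qed.

Lemma phi_z : zcenter (phi a) = K.
Proof. by rewrite (zchar phi_char) cardS. Qed.

Lemma ivt t : t <= n -> forall i, i <= #|[set s in S | (s : nat) < t]| ->
  exists2 t', t' <= t & #|[set s in S | (s : nat) < t']| = i.
Proof.
elim: t => [|t IH] ht i hi.
  have e0 : [set s in S | (s : nat) < 0] = set0 by apply/setP => s; rewrite !inE ltn0 andbF.
  by exists 0 => //; move: hi; rewrite e0 cards0 leqn0 => /eqP ->.
have := cnt_step S (Ordinal ht); rewrite /= => e.
case: (leqP i #|[set s in S | (s : nat) < t]|) => h.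
  by have [t' h1 h2] := IH (ltnW ht) i h; exists t' => //; lia.
exists t.+1 => //; apply/eqP; rewrite eqn_leq hi /= e.
rewrite andbT; case: (Ordinal ht \in S) => /=; rewrite ?addn1 ?addn0 //; exact: ltnW.
Qed.

Lemma phi_PF : phi a \in parking_functions n.
Proof.
rewrite inE; apply/andP; split.
  apply/forallP => j; rewrite phi_val.
  case hS: (j \in S); first by rewrite /phiv hS.
  case hk: ((a j : nat) <= K); first by have := phiv_nS (negbT hS) hk; lia.
  have hk' : K < a j by move/negbT: hk; rewrite -ltnNge.
have [-> _] := phiv_big hk'; exact: pos.
apply/forallP => i; apply/implyP => hi.
case: (leqP (i : nat) K) => hiK.
  have := ivt (leqnn n) (i := i); rewrite cnt_all cardS => /(_ hiK) [t ht et].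
  rewrite -{1}et; apply: subset_leq_card; apply/subsetP => s; rewrite !inE => /andP [hs hst].
  rewrite phi_val; apply: leq_trans (phiv_S hs) _; rewrite -et.
  have : s |: [set s' in S | (s' : nat) < s] \subset [set s' in S | (s' : nat) < t].
    apply/subsetP => x; rewrite !inE => /orP [/eqP ->|/andP [-> h]]; first by rewrite hs.
    rewrite /=; lia.
  by move/subset_leq_card; rewrite cardsU1 inE ltnn andbF add1n.
apply: leq_trans (PF_cnt ha hi (ltn_ord i)) _.
apply: subset_leq_card; apply/subsetP => j; rewrite !inE phi_val => hj.
case hS: (j \in S); first by have := phiv_S_K hS; lia.
case hk: ((a j : nat) <= K); first by have := phiv_nS (negbT hS) hk; lia.
have hk' : K < a j by move/negbT: hk; rewrite -ltnNge.
by have [-> _] := phiv_big hk'.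
Qed.

End Phi2.


Section Inj.
Variable n : nat.

Lemma phiv_gt (a : {ffun 'I_n -> 'I_n.+1}) j : a \in parking_functions n ->
  ((Kf a).+1 < phiv a j) = (Kf a < a j).
Proof.
move=> ha.
case hS: (j \in Sa a).
  have h1 := phiv_S_K ha hS; have h2 := S_le hS.
  apply/idP/idP => h; lia.
case hk: ((a j : nat) <= Kf a).
  have [_ h1] := phiv_nS ha (negbT hS) hk.
  apply/idP/idP => h; lia.
have hk' : Kf a < a j by move/negbT: hk; rewrite -ltnNge.
have [-> h2] := phiv_big ha hk'.
by rewrite hk'; apply/idP; lia.
Qed.

Lemma decomp (a : {ffun 'I_n -> 'I_n.+1}) s : a \in parking_functions n -> s \in Sa a ->
  #|[set s' in Sa a | ((s' : nat) < s) && ((a s' : nat) < a s)]| +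
  #|[set s' in Sa a | ((s : nat) < s') && ((a s' : nat) < a s)]| = (a s).-1.
Proof.
move=> ha hs.
rewrite -(cntS ha (_ : (a s : nat) <= (Kf a).+1)); last by have := S_le hs; lia.
rewrite [RHS](card_split _ (fun x : 'I_n => (x : nat) < s)); congr (_ + _); apply: eq_card => x; rewrite !inE.
  by case: (x \in Sa a); case: ((x : nat) < s); case: ((a x : nat) < a s).
case: (x \in Sa a) => //=.
case: (ltngtP x s) => h /=; rewrite ?andbT ?andbF //.
have -> : x = s by apply/val_inj.
by rewrite ltnn.
Qed.

Lemma lehmer_step (a b : {ffun 'I_n -> 'I_n.+1}) s :
  a \in parking_functions n -> b \in parking_functions n -> Sa a = Sa b ->
  s \in Sa a -> (forall s', s' \in Sa a -> (s : nat) < s' -> a s' = b s') ->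
  phiv a s = phiv b s -> (a s : nat) < b s -> False.
Proof.
move=> ha hb eS hs hag ep hlt.
have hsb : s \in Sa b by rewrite -eS.
have da := decomp ha hs.
have db := decomp hb hsb.
rewrite -eS in db.
move: ep; rewrite /phiv hs hsb -eS => -[ep].
have eT : [set s' in Sa a | ((s : nat) < s') && ((b s' : nat) < b s)] =
          [set s' in Sa a | ((s : nat) < s') && ((a s' : nat) < b s)].
  apply/setP => x; rewrite !inE; case hx: (x \in Sa a) => //=.
  case hxs: ((s : nat) < x) => //=; by rewrite (hag x hx hxs).
rewrite eT in db.
set W := [set s' in Sa a | ((s : nat) < s') && ((a s : nat) <= a s') && ((a s' : nat) < b s)].
have eW : #|[set s' in Sa a | ((s : nat) < s') && ((a s' : nat) < b s)]| =
          #|[set s' in Sa a | ((s : nat) < s') && ((a s' : nat) < a s)]| + #|W|.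
  rewrite (card_split _ (fun x : 'I_n => (a x : nat) < a s)); congr (_ + _); apply: eq_card => x; rewrite !inE.
    case hax: ((a x : nat) < a s); rewrite ?andbT ?andbF //.
    by rewrite (ltn_trans hax hlt) !andbT.
  case: (x \in Sa a); case: ((s : nat) < x) => //=; case: (ltnP (a x : nat) (a s)) => h /=; rewrite ?andbF ?andbT //.
have hbK : (b s : nat) <= Kf a.
  have := S_le hsb; have : Kf a = Kf b by rewrite -(cardS ha) -(cardS hb) eS.
  by move=> ->.
have hWsub : W \subset [set s' in Sa a | (a s' : nat) < b s] :\: [set s' in Sa a | (a s' : nat) < (a s).+1].
  apply/subsetP => x; rewrite !inE => /and3P [hx /andP [hsx hle] hxb].
  rewrite hx hxb andbT /= -leqNgt ltn_neqAle hle andbT.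
  rewrite andbT; apply/negP => /eqP e; have e' : a s = a x by apply/val_inj.
  have := S_inj hs hx e' => es; by rewrite es ltnn in hsx.
have hcard := subset_leq_card hWsub.
rewrite cardsD in hcard.
have eI : [set s' in Sa a | (a s' : nat) < b s] :&: [set s' in Sa a | (a s' : nat) < (a s).+1] =
          [set s' in Sa a | (a s' : nat) < (a s).+1].
  apply/setIidPr/subsetP => x; rewrite !inE => /andP [-> h] /=; lia.
rewrite eI !(cntS ha) in hcard; [|lia|lia].
have hpos := pos ha s.
move: da db hcard eW; rewrite ep.
set A := #|[set s' in Sa a | ((s' : nat) < s) && ((b s' : nat) < b s)]|.
set B := #|[set s' in Sa a | ((s : nat) < s') && ((a s' : nat) < a s)]|.
set C := #|[set s' in Sa a | ((s : nat) < s') && ((a s' : nat) < b s)]|.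
lia.
Qed.


Lemma cnt_le_mono (S : {set 'I_n}) (M1 M2 : 'I_n) : M2 \in S -> (M1 : nat) < M2 ->
  #|[set s in S | (s : nat) <= M1]| < #|[set s in S | (s : nat) <= M2]|.
Proof.
move=> h2 hlt.
have : M2 |: [set s in S | (s : nat) <= M1] \subset [set s in S | (s : nat) <= M2].
  apply/subsetP => x; rewrite !inE => /orP [/eqP ->|/andP [-> h]]; first by rewrite h2 leqnn.
  by rewrite /=; apply: leq_trans h (ltnW hlt).
move/subset_leq_card; rewrite cardsU1 inE (_ : (M2 : nat) <= M1 = false) ?andbF ?add1n //; by apply/negbTE; rewrite -ltnNge.
Qed.

Lemma cnt_le_inj (S : {set 'I_n}) (M1 M2 : 'I_n) : M1 \in S -> M2 \in S ->
  #|[set s in S | (s : nat) <= M1]| = #|[set s in S | (s : nat) <= M2]| -> M1 = M2.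
Proof.
move=> h1 h2 e; case: (ltngtP M1 M2) => h.
- by have := cnt_le_mono h2 h; rewrite e ltnn.
- by have := cnt_le_mono h1 h; rewrite e ltnn.
- exact: val_inj.
Qed.

Lemma phi_inj : {in parking_functions n &, injective (@phi n)}.
Proof.
move=> a b ha hb e.
have ca := phi_char ha; have cb := phi_char hb; rewrite e in ca.
have eS := char_uniq ca cb.
have eK : Kf a = Kf b by rewrite -(cardS ha) -(cardS hb) eS.
have ev : forall j, phiv a j = phiv b j by move=> j; rewrite -(phi_val ha) -(phi_val hb) e.
have hS : forall s, s \in Sa a -> a s = b s.
  suff H : forall m s, s \in Sa a -> n - s <= m -> a s = b s by move=> s hs; apply: (H n s hs); lia.
  elim => [|m IH] s hs hm; first by have := ltn_ord s; lia.
  case: (ltngtP (a s : nat) (b s)) => [h|h|h].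
  - exfalso; apply: (lehmer_step ha hb eS hs _ (ev s) h) => s' hs' hlt; apply: IH => //; lia.
  - exfalso; have hsb : s \in Sa b by rewrite -eS.
    apply: (lehmer_step hb ha (esym eS) hsb _ (esym (ev s)) h) => s' hs' hlt.
    rewrite -eS in hs'; symmetry; apply: IH => //; lia.
  - exact: val_inj.
apply/ffunP => j.
case hj: (j \in Sa a); first exact: hS.
have hjb : j \in Sa b = false by rewrite -eS.
have ga := phiv_gt j ha; have gb := phiv_gt j hb.
rewrite ev in ga; rewrite -eK ga in gb.
case hk: ((a j : nat) <= Kf a).
  have hkb : (b j : nat) <= Kf a by rewrite leqNgt -gb -leqNgt.
  have hkb' : (b j : nat) <= Kf b by rewrite -eK.
  have := ev j; rewrite /phiv hj hjb hk hkb' eS => -[ec].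
  have hMa : Mx a j \in Sa b by rewrite -eS; apply: S_Mx; rewrite hk.
  have eM := cnt_le_inj hMa (S_Mx hkb') ec.
  have [ea1 _ _] := Mx_spec a j; have [eb1 _ _] := Mx_spec b j.
  have hM : a (Mx a j) = b (Mx a j) by apply: hS; rewrite eS.
  by rewrite ea1 eM eb1 in hM.
have hk' : Kf a < a j by move/negbT: hk; rewrite -ltnNge.
have hkb : Kf b < b j by rewrite -eK -gb.
have [ea _] := phiv_big ha hk'; have [eb _] := phiv_big hb hkb.
apply: val_inj; rewrite /= -ea -eb; exact: ev.
Qed.

End Inj.


Import GRing.Theory.
Local Open Scope ring_scope.

Theorem theorem2p1 (n : nat) (hn : (0 < n)%N) :
  \sum_(E in trees n) ('X^(leg E) : {poly int})
  = \sum_(a in parking_functions n) ('X^(zcenter a) : {poly int}).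
Proof.
have eT : trees n = (@Phi n) @: parking_functions n.
  apply/setP => E; apply/idP/imsetP => [hE|[a ha ->]]; last exact: Phi_tree ha.
  by exists (aE E); [exact: aE_PF hE | rewrite Phi_aE].
rewrite eT big_imset /=; last exact: Phi_inj.
have eP : parking_functions n = (@phi n) @: parking_functions n.
  apply/eqP; rewrite eq_sym eqEcard card_in_imset ?leqnn ?andbT; last exact: phi_inj.
  apply/subsetP => c /imsetP [a ha ->]; exact: phi_PF.
rewrite [in RHS]eP big_imset /=; last exact: phi_inj.
apply: eq_bigr => a ha; by rewrite (Phi_leg ha) (phi_z ha).
Qed.
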